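(* Let $\mathfrak L=\mathbb V\oplus\mathbb W$ be a color gLt-algebra admitting a quasi-multiplicative basis $\mathfrak B=\{e_i\}_{i\in I}$ of $\mathbb W\neq0$. Suppose $\mathfrak L$ is centerless, i.e. $\mathcal Z(\mathfrak L)=0$, and $\mathbb V$ is tight. Then $\mathfrak L=\bigoplus_{[i]\in I/\sim}\mathfrak J_{[i]}$.
   Context: Let $\mathbb F$ be a field, $\mathbb G$ an abelian group, $n\ge 2$, and $\epsilon:\mathbb G\times\mathbb G\to\mathbb F\setminus\{0\}$ a bicharacter ($\epsilon(k,g+h)=\epsilon(k,g)\epsilon(k,h)$, $\epsilon(g+h,k)=\epsilon(g,k)\epsilon(h,k)$, $\epsilon(g,h)\epsilon(h,g)=1$). A graded $n$-ary algebra is a $\mathbb G$-graded vector space $\mathfrak L=\bigoplus_{g\in\mathbb G}\mathfrak L_g$ with an $n$-linear map $\langle\cdot,\dots,\cdot\rangle:\mathfrak L^n\to\mathfrak L$ such that $\langle\mathfrak L_{g_1},\dots,\mathfrak L_{g_n}\rangle\subset\mathfrak L_{g_1+\dots+g_n}$. For $\sigma\in\mathbb S_n$ write $\langle x_1,\dots,x_n\rangle_\sigma:=\langle x_{\sigma(1)},\dots,x_{\sigma(n)}\rangle$; for subsets $A_1,\dots,A_n$, $\langle A_1,\dots,A_n\rangle_\sigma$ denotes the linear span of all $\langle x_1,\dots,x_n\rangle_\sigma$ with $x_r\in A_r$. A color gLt-algebra is a graded $n$-ary algebra satisfying, for each $k=1,\dots,n$ and fixed scalars $\alpha^{\sigma_1,\sigma_2}_{i,j,k}\in\mathbb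 F$, the color version (each term on the right multiplied by the product of values of $\epsilon$ on the degrees of the homogeneous arguments transposed in passing from the left-hand order to the order of that term) of the identity $\langle y_1,\dots,y_{k-1},\langle x_1,\dots,x_n\rangle,y_k,\dots,y_{n-1}\rangle=\sum_{1\le i,j\le n,\,\sigma_1\in\mathbb S_n,\,\sigma_2\in\mathbb S_{n-1}}\alpha^{\sigma_1,\sigma_2}_{i,j,k}\langle x_{\sigma_1(1)},\dots,x_{\sigma_1(i-1)},\langle y_{\sigma_2(1)},\dots,y_{\sigma_2(j-1)},x_{\sigma_1(i)},y_{\sigma_2(j)},\dots,y_{\sigma_2(n-1)}\rangle,x_{\sigma_1(i+1)},\dots,x_{\sigma_1(n)}\rangle$. The center is $\mathcal Z(\mathfrak L):=\{x\in\mathfrak L:\langle x,\mathfrak L,\dots,\mathfrak L\rangle_\sigma=0\text{ for all }\sigma\in\mathbb S_n\}$. $\mathfrak L$ admits a quasi-multiplicative basis if $\mathfrak L=\mathbb V\oplus\mathbb W$ with $\mathbb V$, $\mathbb W\ne0$ graded subspaces and $\mathfrak B=\{e_i\}_{i\in I}$ a basis of homogeneous elements of $\mathbb W$ such that: (1) for $i_1,\dots,i_n\in I$, either $\langle e_{i_1},\dots,e_{i_n}\rangle\in\mathbb Fe_j$ for some $j\in I$ or $\langle e_{i_1},\dots,e_{i_n}\rangle\in\mathbb V$; (2) for $0<k<n$, $i_1,\dots,i_k\in I$ and $\sigma\in\mathbb S_n$, $\langle e_{i_1},\dots,e_{i_k},\mathbb V,\dots,\mathbb V\rangle_\sigma\subset\mathbb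 Fe_{j_\sigma}$ for some $j_\sigma\in I$; (3) either $\langle\mathbb V,\dots,\mathbb V\rangle\subset\mathbb Fe_j$ for some $j\in I$ or $\langle\mathbb V,\dots,\mathbb V\rangle\subset\mathbb V$. Index maps: let $v$ be a symbol not in $I$, $\mathfrak I:=I\,\dot\cup\,\{v\}$; for each $j\in\mathfrak I$ take a new symbol $\overline j$, $\overline I:=\{\overline i:i\in I\}$, $\overline{\mathfrak I}:=\overline I\,\dot\cup\,\{\overline v\}$; set $\overline{(\overline j)}:=j$, $\overline J:=\{\overline j:j\in J\}$ for a set $J$ of symbols ($\overline\emptyset=\emptyset$). Put $u_j:=e_j$ for $j\in I$ and $u_v:=\mathbb V$. For $\sigma\in\mathbb S_n$ and $(j_1,\dots,j_n)\in\mathfrak I^n$ let $a_\sigma(j_1,\dots,j_n)=\{r\}$ if $r\in I$ and $0\ne\langle u_{j_1},\dots,u_{j_n}\rangle_\sigma\subset\mathbb Fe_r$, $=\{v\}$ if $0\ne\langle u_{j_1},\dots,u_{j_n}\rangle_\sigma\subset\mathbb V$, and $=\emptyset$ otherwise. For $j,j_2,\dots,j_n\in\mathfrak I$ let $b_\sigma(j,\overline j_2,\dots,\overline j_n):=\{x\in\mathfrak I: a_\sigma(x,j_2,\dots,j_n)=\{j\}\}$. Define $\mu$ on $(\mathfrak I\,\dot\cup\,\overline{\mathfrak I})\times(\mathfrak I^{n-1}\,\dot\cup\,\overline{\mathfrak I}^{n-1})$ with values subsets of $\mathfrak I$ by: $\mu(j,j_1,\dots,j_{n-1})=\bigcup_{\sigma\in\mathbb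 S_n}a_\sigma(j,j_1,\dots,j_{n-1})$ for $j,j_1,\dots,j_{n-1}\in\mathfrak I$; $\mu(j,\overline j_1,\dots,\overline j_{n-1})=\bigcup_{\sigma\in\mathbb S_n}b_\sigma(j,\overline j_1,\dots,\overline j_{n-1})$ for $j,j_1,\dots,j_{n-1}\in\mathfrak I$; $\mu(\overline j,j_1,\dots,j_{n-1})=\bigcup_{1\le k\le n-1,\ \sigma\in\mathbb S_n}b_\sigma(j_k,\overline j,\overline j_1,\dots,\overline j_{k-1},\overline j_{k+1},\dots,\overline j_{n-1})$ for $j,j_1,\dots,j_{n-1}\in\mathfrak I$; and $\mu(\overline j,\overline j_1,\dots,\overline j_{n-1})=\emptyset$. Define $\phi$ on pairs $(J,X)$ with $J\subset I\,\dot\cup\,\overline I$ and $X\in\mathfrak I^{n-1}\,\dot\cup\,\overline{\mathfrak I}^{n-1}$ by $\phi(\emptyset,X)=\emptyset$ and, for $J\ne\emptyset$, $\phi(J,X):=K\cup\overline K$ where $K:=\big(\bigcup_{j\in J}\mu(j,X)\big)\setminus\{v\}$. $\mathbb V$ is tight if $\mathbb V=\{0\}$ or $\mathbb V=\sum\{\mathbb F\langle e_{i_1},\dots,e_{i_n}\rangle: i_1,\dots,i_n\in I,\ \mu(i_1,\dots,i_n)=\{v\}\}$. Connections: for distinct $i,j\in I$, $i$ is connected to $j$ if there exist $t\ge1$, $X_1,\dots,X_t\in\mathfrak I^{n-1}\,\dot\cup\,\overline{\mathfrak I}^{n-1}$ and $\widetilde i\in\{i,\overline i\}$ such that $\phi(\{\widetilde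 i\},X_1)\ne\emptyset$, …, $\phi(\cdots\phi(\{\widetilde i\},X_1)\cdots,X_{t-1})\ne\emptyset$, and $j\in\phi(\cdots\phi(\phi(\{\widetilde i\},X_1),X_2)\cdots,X_t)$; every $i$ is connected to itself. Being connected is an equivalence relation $\sim$ on $I$; $[i]$ denotes the class of $i$. Define $\mathbb V_{[i]}:=\big(\sum_{i_1,\dots,i_n\in[i]}\mathbb F\langle e_{i_1},\dots,e_{i_n}\rangle\big)\cap\mathbb V$, $\mathbb W_{[i]}:=\bigoplus_{j\in[i]}\mathbb Fe_j$, and $\mathfrak J_{[i]}:=\mathbb V_{[i]}\oplus\mathbb W_{[i]}$. *)

(* Defs.v *)
From HB Require Import structures.
From mathcomp Require Import all_boot all_order all_algebra all_fingroup.
From Stdlib Require List.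
Set Implicit Arguments. Unset Strict Implicit. Unset Printing Implicit Defensive.
Import GRing.Theory.
Local Open Scope ring_scope.

Definition subspace {F : fieldType} {L : lmodType F} (S : L -> Prop) : Prop :=
  S 0 /\ forall (a : F) (x y : L), S x -> S y -> S (a *: x + y).

Definition subset_of {T : Type} (P Q : T -> Prop) : Prop := forall z, P z -> Q z.

Definition span_of {F : fieldType} {L : lmodType F} (P : L -> Prop) : L -> Prop :=
  fun x => exists s : seq (F * L),
    (forall p, List.In p s -> P p.2) /\ x = \sum_(p <- s) p.1 *: p.2.

Definition line {F : fieldType} {L : lmodType F} (v : L) : L -> Prop :=
  fun z => exists c : F, z = c *: v.

Definition nonzero {F : fieldType} {L : lmodType F} (S : L -> Prop) : Prop :=
  exists z, S z /\ z <> 0.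

Definition sum_of {F : fieldType} {L : lmodType F} {T : Type}
    (P : T -> Prop) (A : T -> L -> Prop) (x : L) : Prop :=
  exists (s : seq T) (f : T -> L), List.NoDup s /\
    (forall t, List.In t s -> P t /\ A t (f t)) /\ x = \sum_(t <- s) f t.

Definition independent {F : fieldType} {L : lmodType F} {T : Type}
    (P : T -> Prop) (A : T -> L -> Prop) : Prop :=
  forall (s : seq T) (f : T -> L), List.NoDup s ->
    (forall t, List.In t s -> P t /\ A t (f t)) ->
    \sum_(t <- s) f t = 0 -> forall t, List.In t s -> f t = 0.

Definition is_direct_sum {F : fieldType} {L : lmodType F} {T : Type}
    (X : L -> Prop) (P : T -> Prop) (A : T -> L -> Prop) : Prop :=
  (forall t, P t -> subspace (A t)) /\
  (forall x, X x <-> sum_of P A x) /\ independent P A.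

Definition ins {T : Type} {n : nat} (p : 'I_n) (z : T) (f : 'I_n.-1 -> T) : 'I_n -> T :=
  fun m => match unlift p m with None => z | Some q => f q end.

Definition tcons {T : Type} {m : nat} (z : T) (f : 'I_m.-1 -> T) : 'I_m -> T :=
  fun i => match nat_of_ord i with
           | 0 => z
           | k.+1 => match (insub k : option 'I_m.-1) with Some k' => f k' | None => z end
           end.

Definition bicharacter {F : fieldType} {G : zmodType} (eps : G -> G -> F) : Prop :=
  (forall g h, eps g h != 0) /\
  (forall k g h, eps k (g + h) = eps k g * eps k h) /\
  (forall k g h, eps (g + h) k = eps g k * eps h k) /\
  (forall g h, eps g h * eps h g = 1).

Definition multilinear {F : fieldType} {L : lmodType F} {n : nat}
    (br : ('I_n -> L) -> L) : Prop :=
  forall (f : 'I_n -> L) (r : 'I_n) (a : F) (u v : L),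
    br (fun m => if m == r then a *: u + v else f m) =
    a *: br (fun m => if m == r then u else f m) + br (fun m => if m == r then v else f m).

Definition graded_nary_algebra {F : fieldType} {G : zmodType} {L : lmodType F} {n : nat}
    (Lg : G -> L -> Prop) (br : ('I_n -> L) -> L) : Prop :=
  is_direct_sum (fun _ => True) (fun _ => True) Lg /\ multilinear br /\
  forall (g : 'I_n -> G) (x : 'I_n -> L),
    (forall r, Lg (g r) (x r)) -> Lg (\sum_(r < n) g r) (br x).

(* color factor: product of eps(deg a, deg b) over all pairs (a,b) with a
   before b in l1 and b before a in l2 (the pairs transposed) *)
Definition color_factor {F : fieldType} {G : zmodType} {T : eqType}
    (eps : G -> G -> F) (deg : T -> G) (l1 l2 : seq T) : F :=
  \prod_(a <- l1) \prod_(b <- l1 | ((index a l1 < index b l1) && (index b l2 < index a l2))%N)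
     eps (deg a) (deg b).

(* labels: inl r stands for x_{r}, inr s for y_{s} *)
Definition label_deg {G : zmodType} {n : nat} (g : 'I_n -> G) (h : 'I_n.-1 -> G)
    (l : 'I_n + 'I_n.-1) : G :=
  match l with inl r => g r | inr s => h s end.

(* order of the arguments in  <y_1,..,y_{k-1},<x_1,..,x_n>,y_k,..,y_{n-1}>  *)
Definition lhs_labels {n : nat} (k : 'I_n) : seq ('I_n + 'I_n.-1) :=
  flatten [seq match unlift k m with
               | None => [seq inl r | r <- enum 'I_n]
               | Some q => [:: inr q] end | m <- enum 'I_n].

(* order of the arguments in
  <x_{s1(1)},..,x_{s1(i-1)},<y_{s2(1)},..,y_{s2(j-1)},x_{s1(i)},y_{s2(j)},..>,x_{s1(i+1)},..> *)
Definition rhs_labels {n : nat} (s1 : {perm 'I_n}) (s2 : {perm 'I_n.-1}) (i j : 'I_n)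
    : seq ('I_n + 'I_n.-1) :=
  flatten [seq if m == i then
                 flatten [seq match unlift j m2 with
                              | None => [:: inl (s1 i)]
                              | Some q => [:: inr (s2 q)] end | m2 <- enum 'I_n]
               else [:: inl (s1 m)] | m <- enum 'I_n].

(* indices are 0-based: i, j, k : 'I_n stand for i-1, j-1, k-1 of the paper *)
Definition color_gLt {F : fieldType} {G : zmodType} {L : lmodType F} {n : nat}
    (eps : G -> G -> F) (Lg : G -> L -> Prop) (br : ('I_n -> L) -> L)
    (alpha : {perm 'I_n} -> {perm 'I_n.-1} -> 'I_n -> 'I_n -> 'I_n -> F) : Prop :=
  forall (k : 'I_n) (g : 'I_n -> G) (h : 'I_n.-1 -> G) (x : 'I_n -> L) (y : 'I_n.-1 -> L),
    (forall r, Lg (g r) (x r)) -> (forall s, Lg (h s) (y s)) ->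
    br (ins k (br x) y) =
    \sum_(i < n) \sum_(j < n) \sum_(s1 : {perm 'I_n}) \sum_(s2 : {perm 'I_n.-1})
      (alpha s1 s2 i j k *
       color_factor eps (label_deg g h) (lhs_labels k) (rhs_labels s1 s2 i j)) *:
      br (fun m => if m == i then br (ins j (x (s1 i)) (fun q => y (s2 q)))
                   else x (s1 m)).

Definition bracket_set {F : fieldType} {L : lmodType F} {n : nat}
    (br : ('I_n -> L) -> L) (A : 'I_n -> L -> Prop) (s : {perm 'I_n}) : L -> Prop :=
  span_of (fun z => exists x : 'I_n -> L, (forall r, A r (x r)) /\ z = br (fun m => x (s m))).

Definition center {F : fieldType} {L : lmodType F} {n : nat}
    (br : ('I_n -> L) -> L) : L -> Prop :=
  fun x => forall s : {perm 'I_n},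
    subset_of (bracket_set br (tcons (fun z => z = x) (fun _ _ => True)) s) (fun z => z = 0).

Definition centerless {F : fieldType} {L : lmodType F} {n : nat}
    (br : ('I_n -> L) -> L) : Prop :=
  forall x, center br x -> x = 0.

Definition graded_subspace {F : fieldType} {G : zmodType} {L : lmodType F}
    (Lg : G -> L -> Prop) (S : L -> Prop) : Prop :=
  subspace S /\ forall x, S x -> sum_of (fun _ => True) (fun g z => Lg g z /\ S z) x.

Definition quasi_multiplicative_basis {F : fieldType} {G : zmodType} {L : lmodType F}
    {n : nat} {I : Type}
    (Lg : G -> L -> Prop) (br : ('I_n -> L) -> L) (V W : L -> Prop) (e : I -> L) : Prop :=
  graded_subspace Lg V /\ graded_subspace Lg W /\
  (forall x, V x -> W x -> x = 0) /\ (forall x, exists v w, V v /\ W w /\ x = v + w) /\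
  nonzero W /\
  (forall x, W x <-> span_of (fun z => exists i, z = e i) x) /\
  (forall (s : seq I) (c : I -> F), List.NoDup s ->
      \sum_(i <- s) c i *: e i = 0 -> forall i, List.In i s -> c i = 0) /\
  (forall i, exists g, Lg g (e i)) /\
  (forall t : 'I_n -> I,
      (exists j, line (e j) (br (fun m => e (t m)))) \/ V (br (fun m => e (t m)))) /\
  (forall (k : nat) (t : 'I_n -> I) (s : {perm 'I_n}), (0 < k < n)%N ->
      exists j, subset_of
        (bracket_set br (fun r : 'I_n => if (r < k)%N then (fun z => z = e (t r)) else V) s)
        (line (e j))) /\
  ((exists j, subset_of (bracket_set br (fun _ => V) 1%g) (line (e j))) \/
   subset_of (bracket_set br (fun _ => V) 1%g) V).

(* Index maps.  The symbol v is None : option I ; a barred symbol is    *)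
(* tagged with true, an unbarred one with false.                        *)

Section IndexMaps.
Context {F : fieldType} {L : lmodType F} {n : nat} {I : Type}.
Variables (br : ('I_n -> L) -> L) (V : L -> Prop) (e : I -> L).

Definition u_of (j : option I) : L -> Prop :=
  match j with Some i => (fun z => z = e i) | None => V end.

Definition a_map (s : {perm 'I_n}) (jj : 'I_n -> option I) : option I -> Prop :=
  fun y => nonzero (bracket_set br (fun m => u_of (jj m)) s) /\
           subset_of (bracket_set br (fun m => u_of (jj m)) s)
                     (match y with Some r => line (e r) | None => V end).

Definition b_map (s : {perm 'I_n}) (j : option I) (rest : 'I_n.-1 -> option I)
    : option I -> Prop :=
  fun x => forall y, a_map s (tcons x rest) y <-> y = j.

Definition mu (jb : option I * bool) (Xb : ('I_n.-1 -> option I) * bool) : option I -> Prop :=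
  match jb, Xb with
  | (j, false), (X, false) => fun y => exists s, a_map s (tcons j X) y
  | (j, false), (X, true) => fun y => exists s, b_map s j X y
  | (j, true), (X, false) =>
      fun y => exists (k : 'I_n.-1) s, b_map s (X k) (tcons j (fun q => X (lift k q))) y
  | (_, true), (_, true) => fun _ => False
  end.

Definition phi (J : I * bool -> Prop) (Xb : ('I_n.-1 -> option I) * bool) : I * bool -> Prop :=
  fun p => exists j, J j /\ mu (Some j.1, j.2) Xb (Some p.1).

Definition phi_iter (J : I * bool -> Prop) (Xs : seq (('I_n.-1 -> option I) * bool))
    : I * bool -> Prop := foldl phi J Xs.

Definition connected (i j : I) : Prop :=
  i = j \/
  exists (b : bool) (Xs : seq (('I_n.-1 -> option I) * bool)),
    (0 < size Xs)%N /\
    (forall m, (0 < m < size Xs)%N ->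
       exists p, phi_iter (fun q => q = (i, b)) (take m Xs) p) /\
    phi_iter (fun q => q = (i, b)) Xs (j, false).

Definition cls (i : I) : I -> Prop := fun j => connected i j.

Definition tight : Prop :=
  (forall x, V x -> x = 0) \/
  (forall x, V x <-> span_of (fun z => exists (i1 : I) (rest : 'I_n.-1 -> I),
        (forall y, mu (Some i1, false) (fun q => Some (rest q), false) y <-> y = None) /\
        z = br (tcons (e i1) (fun q => e (rest q)))) x).

Definition V_cls (C : I -> Prop) : L -> Prop :=
  fun x => V x /\ span_of (fun z => exists t : 'I_n -> I,
                             (forall r, C (t r)) /\ z = br (fun m => e (t m))) x.

Definition W_cls (C : I -> Prop) : L -> Prop :=
  span_of (fun z => exists j, C j /\ z = e j).

Definition J_cls (C : I -> Prop) : L -> Prop :=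
  fun x => exists v w, V_cls C v /\ W_cls C w /\ x = v + w.

End IndexMaps.

(* Main.v *)
Require Import Defs.
From HB Require Import structures.
From mathcomp Require Import all_boot all_order all_algebra all_fingroup.
From Stdlib Require Import Relations Classical ClassicalEpsilon FunctionalExtensionality PropExtensionality.
Set Implicit Arguments. Unset Strict Implicit. Unset Printing Implicit Defensive.
Import GRing.Theory.
Local Open Scope ring_scope.

Definition pb (P : Prop) : bool := if excluded_middle_informative P then true else false.
Lemma pbT (P : Prop) : P -> pb P = true.
Proof. by rewrite /pb; case: excluded_middle_informative. Qed.
Lemma pbF (P : Prop) : ~ P -> pb P = false.
Proof. by rewrite /pb; case: excluded_middle_informative. Qed.

Lemma choiceL {A B : Type} (R : A -> B -> Prop) :
  (forall a, exists b, R a b) -> exists f : A -> B, forall a, R a (f a).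
Proof.
move=> H; exists (fun a => proj1_sig (constructive_indefinite_description _ (H a))).
by move=> a; case: (constructive_indefinite_description _ (H a)).
Qed.

Section Gen.
Context {F : fieldType} {L : lmodType F}.

Lemma big_In_eq {T : Type} (s : seq T) (f g : T -> L) :
  (forall t, List.In t s -> f t = g t) -> \sum_(t <- s) f t = \sum_(t <- s) g t.
Proof.
elim: s => [|a s IH] H; first by rewrite !big_nil.
rewrite !big_cons H /=; last by left.
by rewrite IH // => t Ht; apply: H; right.
Qed.

Lemma big_In0 {T : Type} (s : seq T) (f : T -> L) :
  (forall t, List.In t s -> f t = 0) -> \sum_(t <- s) f t = 0.
Proof.
move=> H; rewrite (big_In_eq (g := fun _ => 0)) //.
by rewrite big1.
Qed.

Lemma big_split_at {T : Type} (s : seq T) (C : T) (h : T -> L) :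
  List.NoDup s -> List.In C s ->
  \sum_(t <- s) h t = h C + \sum_(t <- s) (if pb (t = C) then 0 else h t).
Proof.
elim: s => [|a s IH] ND HI; first by case: HI.
inversion ND as [|a' s' Hna NDs]; subst.
rewrite !big_cons.
case: (classic (a = C)) => [Ea|Hne]; first subst a.
  rewrite pbT // add0r; congr (_ + _); apply: big_In_eq => t Ht.
  rewrite pbF // => Et; apply: Hna; by rewrite -Et.
rewrite pbF //.
case: HI => [Ea|HI]; first by [].
by rewrite IH // addrCA.
Qed.

Lemma span_ind (P Q : L -> Prop) :
  Q 0 -> (forall a u v, P u -> Q v -> Q (a *: u + v)) ->
  forall x, span_of P x -> Q x.
Proof.
move=> Q0 QS x [s [Hs ->]]; elim: s Hs => [|p s IH] Hs; first by rewrite big_nil.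
rewrite big_cons; apply: QS; first by apply: Hs; left.
by apply: IH => q Hq; apply: Hs; right.
Qed.

Lemma span_in (P : L -> Prop) x : P x -> span_of P x.
Proof.
move=> Px; exists [:: (1, x)]; split; first by move=> p [<-|[]].
by rewrite big_cons big_nil scale1r addr0.
Qed.

Lemma span0 (P : L -> Prop) : span_of P 0.
Proof. by exists [::]; split => //; rewrite big_nil. Qed.

Lemma spanDZ (P : L -> Prop) a x y : span_of P x -> span_of P y -> span_of P (a *: x + y).
Proof.
move=> [s [Hs ->]] [s' [Hs' ->]].
exists ([seq (a * p.1, p.2) | p <- s] ++ s'); split.
  move=> p Hp; case: (List.in_app_or _ _ _ Hp) => [Hp1|Hp2]; last by apply: Hs'.
  by case: (proj1 (List.in_map_iff _ _ _) Hp1) => q [<- Hq]; exact: (Hs q Hq).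
rewrite big_cat big_map scaler_sumr /=; congr (_ + _).
by apply: eq_bigr => p _; rewrite scalerA.
Qed.

Lemma spanD (P : L -> Prop) x y : span_of P x -> span_of P y -> span_of P (x + y).
Proof. by move=> Hx Hy; rewrite -[x]scale1r; apply: spanDZ. Qed.

Lemma spanZ (P : L -> Prop) a x : span_of P x -> span_of P (a *: x).
Proof. by move=> Hx; rewrite -[_ *: _]addr0; apply: spanDZ => //; apply: span0. Qed.

Lemma spanN (P : L -> Prop) x : span_of P x -> span_of P (- x).
Proof. by move=> Hx; rewrite -scaleN1r; apply: spanZ. Qed.

Lemma span_sub (P S : L -> Prop) : subspace S -> (forall y, P y -> S y) ->
  forall x, span_of P x -> S x.
Proof.
move=> [S0 SS] H; apply: span_ind => // a u v Pu Sv; apply: SS => //; exact: H.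
Qed.

Lemma span_subspace (P : L -> Prop) : subspace (span_of P).
Proof. split; [exact: span0| move=> a x y; exact: spanDZ]. Qed.

Lemma span_mono (P Q : L -> Prop) : (forall y, P y -> Q y) ->
  forall x, span_of P x -> span_of Q x.
Proof. move=> H; apply: span_sub; first exact: span_subspace. by move=> y /H; apply: span_in. Qed.

Lemma subspace_sum (S : L -> Prop) {T : Type} (s : seq T) (f : T -> L) :
  subspace S -> (forall t, List.In t s -> S (f t)) -> S (\sum_(t <- s) f t).
Proof.
move=> [S0 SS]; elim: s => [|a s IH] H; first by rewrite big_nil.
rewrite big_cons -[f a]scale1r; apply: SS; first by apply: H; left.
by apply: IH => t Ht; apply: H; right.
Qed.

Lemma subspaceN (S : L -> Prop) x : subspace S -> S x -> S (- x).
Proof. by move=> [S0 SS] Sx; rewrite -scaleN1r -[_ *: _]addr0; apply: SS. Qed.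

Lemma subspaceD (S : L -> Prop) x y : subspace S -> S x -> S y -> S (x + y).
Proof. by move=> [S0 SS] Sx Sy; rewrite -[x]scale1r; apply: SS. Qed.

Lemma subspaceZ (S : L -> Prop) a x : subspace S -> S x -> S (a *: x).
Proof. by move=> [S0 SS] Sx; rewrite -[_ *: _]addr0; apply: SS. Qed.

Lemma line_subspace (v : L) : subspace (line v).
Proof.
split; first by exists 0; rewrite scale0r.
by move=> a x y [c ->] [d ->]; exists (a * c + d); rewrite scalerDl scalerA.
Qed.

End Gen.

Section Main.
Variables (F : fieldType) (G : zmodType) (L : lmodType F) (n' : nat) (I : Type).
Local Notation n := n'.+2.
Variables (br : ('I_n -> L) -> L) (V W : L -> Prop) (e : I -> L).
Hypothesis ML : multilinear br.
Hypothesis Vsub : subspace V.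
Hypothesis Wspan : forall x, W x <-> span_of (fun z => exists i, z = e i) x.
Hypothesis Eind : forall (s : seq I) (c : I -> F), List.NoDup s ->
      \sum_(i <- s) c i *: e i = 0 -> forall i, List.In i s -> c i = 0.
Hypothesis VW0 : forall x, V x -> W x -> x = 0.
Hypothesis Cond1 : forall t : 'I_n -> I,
      (exists j, line (e j) (br (fun m => e (t m)))) \/ V (br (fun m => e (t m))).

Definition upd (f : 'I_n -> L) (r : 'I_n) (u : L) : 'I_n -> L :=
  fun m => if m == r then u else f m.

Lemma br_upd0 f r : br (upd f r 0) = 0.
Proof.
have H := ML f r 1 0 0; rewrite !scale1r !addr0 in H.
have : br (upd f r 0) + br (upd f r 0) = br (upd f r 0) + 0 by rewrite addr0 /upd -H.
by move/addrI.
Qed.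

Lemma upd_id f r : upd f r (f r) = f.
Proof. by apply: functional_extensionality => m; rewrite /upd; case: eqP => // ->. Qed.

Lemma br_updDZ f r a u v : br (upd f r (a *: u + v)) = a *: br (upd f r u) + br (upd f r v).
Proof. exact: ML. Qed.

Lemma br_updN f r u : br (upd f r (- u)) = - br (upd f r u).
Proof.
by rewrite -[- u]addr0 -scaleN1r br_updDZ br_upd0 addr0 scaleN1r.
Qed.

Lemma br_upd_sum {T : Type} f r (s : seq T) (g : T -> L) :
  br (upd f r (\sum_(t <- s) g t)) = \sum_(t <- s) br (upd f r (g t)).
Proof.
elim: s => [|a s IH]; first by rewrite !big_nil br_upd0.
rewrite !big_cons -IH.
have := br_updDZ f r 1 (g a) (\sum_(t <- s) g t). rewrite !scale1r. by [].
Qed.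

Lemma lin1 (P : L -> Prop) f r :
  (forall u, P u -> br (upd f r u) = 0) -> forall u, span_of P u -> br (upd f r u) = 0.
Proof.
move=> H; apply: (span_ind (Q := fun u => br (upd f r u) = 0)); first exact: br_upd0.
by move=> a u v Pu Hv; rewrite br_updDZ H // Hv scaler0 addr0.
Qed.

Lemma tcons0 {T : Type} {m : nat} (z : T) (f : 'I_m -> T) : tcons (m := m.+1) z f ord0 = z.
Proof. by []. Qed.

Lemma tconsS {T : Type} {m : nat} (z : T) (f : 'I_m -> T) q :
  tcons (m := m.+1) z f (lift ord0 q) = f q.
Proof.
rewrite /tcons lift0 /=.
by rewrite (insubT (fun k => (k < m)%N) (ltn_ord q)) /=; congr f; apply: val_inj.
Qed.

Lemma tcons_eta {T : Type} {m : nat} (g : 'I_m.+1 -> T) i :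
  tcons (m := m.+1) (g ord0) (fun q => g (lift ord0 q)) i = g i.
Proof. by case: (unliftP ord0 i) => [q ->|->]; rewrite ?tconsS ?tcons0. Qed.

Lemma ins_at {T : Type} (p : 'I_n) (z : T) f : ins p z f p = z.
Proof. by rewrite /ins unlift_none. Qed.

Lemma ins_lift {T : Type} (p : 'I_n) (z : T) f q : ins p z f (lift p q) = f q.
Proof. by rewrite /ins liftK. Qed.

Lemma bs_perm (A : 'I_n -> L -> Prop) (tau s : {perm 'I_n}) :
  bracket_set br (fun m => A (tau m)) s = bracket_set br A (s * tau)%g.
Proof.
rewrite /bracket_set; congr span_of.
apply: functional_extensionality => z; apply: propositional_extensionality; split.
  move=> [x [Hx ->]]; exists (fun r => x (tau^-1 r)%g); split.
    by move=> r; have := Hx (tau^-1 r)%g; rewrite permKV.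
  by congr br; apply: functional_extensionality => m; rewrite permM permK.
move=> [x [Hx ->]]; exists (fun r => x (tau r)); split; first by move=> r; apply: Hx.
by congr br; apply: functional_extensionality => m; rewrite permM.
Qed.

Lemma a_map_perm s (tau : {perm 'I_n}) (jj : 'I_n -> option I) y :
  a_map br V e s (fun m => jj (tau m)) y <-> a_map br V e (s * tau)%g jj y.
Proof.
rewrite /a_map.
by rewrite (bs_perm (fun m => u_of V e (jj m))).
Qed.

Lemma a_map_perm' s (tau : {perm 'I_n}) (jj : 'I_n -> option I) y :
  a_map br V e s jj y -> a_map br V e (s * tau^-1)%g (fun m => jj (tau m)) y.
Proof.
by move=> H; apply/a_map_perm; rewrite -mulgA mulVg mulg1.
Qed.

Lemma a_map_ext s (jj jj' : 'I_n -> option I) y :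
  (forall m, jj m = jj' m) -> a_map br V e s jj y -> a_map br V e s jj' y.
Proof.
by move=> H; have -> : jj = jj' by apply: functional_extensionality.
Qed.

Lemma W_e c i : W (c *: e i).
Proof. by apply/Wspan; apply: spanZ; apply: span_in; exists i. Qed.

Lemma line_uniq c1 c2 r1 r2 : c1 *: e r1 = c2 *: e r2 -> c1 *: e r1 != 0 -> r1 = r2.
Proof.
move=> E Hnz; apply: NNPP => Hne.
have ND : List.NoDup [:: r1; r2].
  constructor; first by move=> [E'|[]] //; apply: Hne.
  by constructor; [case| constructor].
have Hs : \sum_(i <- [:: r1; r2]) (fun i => if pb (i = r1) then c1 else - c2) i *: e i = 0.
  rewrite !big_cons big_nil addr0 /= pbT // pbF; last by move=> E'; apply: Hne.
  by rewrite scaleNr E subrr.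
have := Eind ND Hs (i := r1); rewrite /= pbT // => H.
by move: Hnz; rewrite H ?scale0r ?eqxx //; left.
Qed.

Lemma a_map_uniq s jj y1 y2 : a_map br V e s jj y1 -> a_map br V e s jj y2 -> y1 = y2.
Proof.
move=> [[z [Hz Hnz]] H1] [_ H2].
move: (H1 z Hz) (H2 z Hz).
case: y1 {H1} => [r1|]; case: y2 {H2} => [r2|] //.
- move=> [c1 E1] [c2 E2]; congr Some; apply: (line_uniq (c1 := c1) (c2 := c2)).
    by rewrite -E1 -E2.
  by rewrite -E1; apply/eqP.
- by move=> [c1 E1] HV; case: Hnz; apply: VW0 => //; rewrite E1; apply: W_e.
- by move=> HV [c1 E1]; case: Hnz; apply: VW0 => //; rewrite E1; apply: W_e.
Qed.

Lemma a_map_basis (t : 'I_n -> I) (S : L -> Prop) :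
  subspace S -> S (br (fun m => e (t m))) -> br (fun m => e (t m)) <> 0 ->
  nonzero (bracket_set br (fun m => u_of V e (Some (t m))) 1%g) /\
  subset_of (bracket_set br (fun m => u_of V e (Some (t m))) 1%g) S.
Proof.
move=> SS HS Hnz.
have Hg : forall z, (exists x : 'I_n -> L, (forall r, u_of V e (Some (t r)) (x r)) /\
      z = br (fun m => x ((1 : {perm 'I_n})%g m))) -> z = br (fun m => e (t m)).
  move=> z [x [Hx ->]]; congr br; apply: functional_extensionality => m.
  by rewrite perm1; apply: Hx.
split.
  exists (br (fun m => e (t m))); split => //; apply: span_in.
  exists (fun m => e (t m)); split => //.
  by congr br; apply: functional_extensionality => m; rewrite perm1.
by move=> z; apply: span_sub => // y /Hg ->.
Qed.


Lemma a_map_iff_perm s (tau : {perm 'I_n}) jjA jjB y :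
  (forall m, jjB m = jjA (tau m)) ->
  (a_map br V e (s * tau^-1)%g jjB y <-> a_map br V e s jjA y).
Proof.
move=> H; have -> : jjB = (fun m => jjA (tau m)) by apply: functional_extensionality.
by rewrite a_map_perm -mulgA mulVg mulg1.
Qed.

Definition R1 (p q : I) := exists b (Xb : ('I_n.-1 -> option I) * bool),
  mu br V e (Some p, b) Xb (Some q).

Definition conn := connected br V e.

Lemma phi_iter_rt Xs J p : phi_iter br V e J Xs p ->
  exists q, J q /\ clos_refl_trans _ R1 q.1 p.1.
Proof.
elim: Xs J => [|X Xs IH] J /=.
  by move=> Hp; exists p; split => //; apply: rt_refl.
move=> /IH [q [[j [Jj Hmu]] Hrt]]; exists j; split => //.
apply: rt_trans Hrt; apply: rt_step; exists j.2, X; exact: Hmu.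
Qed.

Lemma conn_rt i j : conn i j -> clos_refl_trans _ R1 i j.
Proof.
case=> [->|[b [Xs [_ [_ H]]]]]; first exact: rt_refl.
by have [q [-> Hq]] := phi_iter_rt H.
Qed.

Lemma phi_iter_bool J Xs p b1 b2 : (0 < size Xs)%N ->
  phi_iter br V e J Xs (p, b1) -> phi_iter br V e J Xs (p, b2).
Proof.
by case/lastP: Xs => [|Xs X] // _; rewrite /phi_iter foldl_rcons.
Qed.

Lemma conn_step i k j : conn i k -> R1 k j -> conn i j.
Proof.
move=> Hik [b' [X' HX']]; right.
case: Hik => [Eik|[b [Xs [Hsz [Hmid Hend]]]]].
  subst k; exists b', [:: X']; split => //; split; first by move=> m /andP [H1 H2]; case: m H1 H2 => [|[|]].
  by exists (i, b').
exists b, (rcons Xs X'); split; first by rewrite size_rcons.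
split.
  move=> m /andP [H1 H2]; rewrite size_rcons ltnS leq_eqVlt in H2.
  case/orP: H2 => [/eqP ->|H2].
    by exists (k, false); rewrite -cats1 takel_cat // take_size.
  by rewrite -cats1 takel_cat ?(ltnW H2) //; apply: Hmid; rewrite H1 H2.
rewrite /phi_iter foldl_rcons; exists (k, b'); split => //.
exact: (phi_iter_bool (b1 := false)).
Qed.

Lemma rt_conn i j : clos_refl_trans _ R1 i j -> conn i j.
Proof.
move/clos_rt_rtn1_iff; elim => [|y z Hyz _ IH]; first by left.
exact: conn_step IH Hyz.
Qed.

Definition swap01 : {perm 'I_n} := tperm ord0 (lift ord0 ord0).

Lemma swap01E {T : Type} (a b : T) (f : 'I_n' -> T) m :
  tcons (m := n) b (tcons (m := n'.+1) a f) m =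
  tcons (m := n) a (tcons (m := n'.+1) b f) (swap01 m).
Proof.
rewrite /swap01.
case: (unliftP ord0 m) => [m1 ->|->]; last by rewrite tpermL tconsS tcons0 tcons0.
case: (unliftP ord0 m1) => [m2 ->|->]; last by rewrite tpermR tconsS tcons0 tcons0.
rewrite tpermD ?neq_lift ?(inj_eq lift_inj) ?neq_lift //.
by rewrite !tconsS.
Qed.

Lemma R1_sym p q : R1 p q -> R1 q p.
Proof.
move=> [b [[X bX] H]].
case: b H; case: bX => //= H.
-
  case: H => k [s H].
  exists true, (X, false); exists k, (s * swap01^-1)%g => y.
  rewrite (@a_map_iff_perm s swap01
     (tcons (m := n) (Some q) (tcons (m := n'.+1) (Some p) (fun q0 => X (lift k q0))))); first exact: H.
  by move=> m; apply: swap01E.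
-
  case: H => s H; exists false, (X, false); exists s; exact/H.
-
  case: H => s H; exists false, (X, true); exists s => y; split; last by move->.
  by move=> H'; apply: a_map_uniq H' H.
Qed.

Lemma conn_refl i : conn i i.
Proof. by left. Qed.

Lemma conn_sym i j : conn i j -> conn j i.
Proof.
move/conn_rt => H; apply: rt_conn.
elim: H => [x y Hxy|x|x y z _ IH1 _ IH2].
- by apply: rt_step; apply: R1_sym.
- exact: rt_refl.
- exact: rt_trans IH2 IH1.
Qed.

Lemma conn_trans i j k : conn i j -> conn j k -> conn i k.
Proof.
by move=> /conn_rt H1 /conn_rt H2; apply: rt_conn; apply: rt_trans H1 H2.
Qed.

Lemma R1_conn i j : R1 i j -> conn i j.
Proof. by move=> H; apply: rt_conn; apply: rt_step. Qed.

Lemma cls_eq i j : conn i j -> cls br V e i = cls br V e j.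
Proof.
move=> Hij; apply: functional_extensionality => k; apply: propositional_extensionality.
split => H; first exact: (conn_trans (conn_sym Hij) H).
exact: (conn_trans Hij H).
Qed.

Lemma cls_conn i j : cls br V e i = cls br V e j -> conn i j.
Proof. move=> E; have H : cls br V e j j by left. by rewrite -E in H. Qed.

Lemma KeyLine s (t : 'I_n -> I) r :
  a_map br V e s (fun m => Some (t m)) (Some r) -> forall a, R1 (t a) r.
Proof.
move=> H a; pose tau : {perm 'I_n} := tperm ord0 a.
exists false, ((fun q => Some (t (tau (lift ord0 q)))), false).
exists (s * tau^-1)%g.
rewrite (@a_map_iff_perm s tau (fun m => Some (t m))) //.
move=> m; have := tcons_eta (fun m => Some (t (tau m))) m.
by rewrite /= /tau tpermL.
Qed.

Lemma perm01 (a b : 'I_n) : a != b ->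
  exists tau : {perm 'I_n}, tau ord0 = a /\ tau (lift ord0 ord0) = b.
Proof.
move=> Hab; pose c := tperm ord0 a b.
exists (tperm (lift ord0 ord0) c * tperm ord0 a)%g; rewrite !permM.
have Hc : c != ord0.
  apply/eqP => Ec; move: Hab; rewrite -(tpermK ord0 a b) -/c Ec tpermL eqxx //.
split; last by rewrite tpermL /c tpermK.
by rewrite (@tpermD _ (lift ord0 ord0) c ord0) ?tpermL // eq_sym neq_lift.
Qed.

Lemma KeyV s (t : 'I_n -> I) a b :
  a_map br V e s (fun m => Some (t m)) None -> a != b -> R1 (t b) (t a).
Proof.
move=> H Hab; have [tau [Ha Hb]] := perm01 Hab.
pose X := tcons (m := n'.+1) None (fun q => Some (t (tau (lift ord0 (lift ord0 q))))).
exists true, (X, false); exists ord0, (s * tau^-1)%g => y.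
rewrite (@a_map_iff_perm s tau (fun m => Some (t m))).
  split; first by move=> H'; apply: a_map_uniq H' H.
  by move->.
move=> m; case: (unliftP ord0 m) => [m1 ->|->]; last by rewrite tcons0 Ha.
rewrite tconsS; case: (unliftP ord0 m1) => [m2 ->|->]; last by rewrite tcons0 Hb.
by rewrite tconsS /X tconsS.
Qed.

Lemma conn_basis (t : 'I_n -> I) : br (fun m => e (t m)) <> 0 ->
  forall a b, conn (t a) (t b).
Proof.
move=> Hnz a b; case: (Cond1 t) => [[j Hj]|HV].
  have Ha : a_map br V e 1%g (fun m => Some (t m)) (Some j).
    exact: (a_map_basis (line_subspace (e j)) Hj Hnz).
  apply: conn_trans (R1_conn (KeyLine Ha a)) _.
  exact: conn_sym (R1_conn (KeyLine Ha b)).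
have Ha : a_map br V e 1%g (fun m => Some (t m)) None.
  exact: (a_map_basis Vsub HV Hnz).
case: (eqVneq a b) => [->|Hab]; first exact: conn_refl.
exact: conn_sym (R1_conn (KeyV Ha Hab)).
Qed.

Lemma CC0 (z : 'I_n -> L) (K : 'I_n -> I) :
  (forall r, exists t, z r = e t /\ conn (K r) t) ->
  (exists a b, ~ conn (K a) (K b)) -> br z = 0.
Proof.
move=> Hz [a [b Hab]]; have [tt Htt] := choiceL Hz.
have -> : z = (fun m => e (tt m)).
  by apply: functional_extensionality => m; case: (Htt m).
apply: NNPP => Hnz; apply: Hab.
have := conn_basis Hnz a b => H.
apply: conn_trans (proj2 (Htt a)) _; apply: conn_trans H _.
exact: conn_sym (proj2 (Htt b)).
Qed.

Definition srcf (r0 j : 'I_n) (s2 : {perm 'I_n.-1}) (m : 'I_n) : 'I_n :=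
  if unlift j m is Some q then lift r0 (s2 q) else r0.

Lemma srcf_j r0 j s2 : srcf r0 j s2 j = r0.
Proof. by rewrite /srcf unlift_none. Qed.

Lemma srcf_lift r0 j s2 q : srcf r0 j s2 (lift j q) = lift r0 (s2 q).
Proof. by rewrite /srcf liftK. Qed.

Lemma srcf_inj r0 j s2 : injective (srcf r0 j s2).
Proof.
move=> m1 m2.
case: (unliftP j m1) => [q1 ->|->]; case: (unliftP j m2) => [q2 ->|->];
  rewrite ?srcf_lift ?srcf_j //.
- by move/lift_inj/perm_inj => ->.
- by move=> E; exfalso; move/eqP: (neq_lift r0 (s2 q1)); apply.
- by move=> E; exfalso; move/eqP: (neq_lift r0 (s2 q2)); apply.
Qed.


Variables (eps : G -> G -> F) (Lg : G -> L -> Prop)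
  (alpha : {perm 'I_n} -> {perm 'I_n.-1} -> 'I_n -> 'I_n -> 'I_n -> F).
Hypothesis gLt : color_gLt eps Lg br alpha.
Hypothesis graded : forall (g : 'I_n -> G) (x : 'I_n -> L),
  (forall r, Lg (g r) (x r)) -> Lg (\sum_(r < n) g r) (br x).
Hypothesis ehom : forall i, exists g, Lg g (e i).

Lemma hom_br (t : 'I_n -> I) : exists g, Lg g (br (fun m => e (t m))).
Proof.
have [deg Hd] := choiceL ehom.
by exists (\sum_(r < n) deg (t r)); apply: graded => r; apply: Hd.
Qed.

Lemma CC N : forall (z : 'I_n -> L) (K : 'I_n -> I) (D : {set 'I_n}),
  (#|D| <= N)%N ->
  (forall r, r \notin D -> exists t, z r = e t /\ conn (K r) t) ->
  (forall r, r \in D -> exists t : 'I_n -> I,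
      z r = br (fun m => e (t m)) /\ forall m, conn (K r) (t m)) ->
  (exists a b, ~ conn (K a) (K b)) -> br z = 0.
Proof.
elim: N => [|N IH] z K D HD Hout Hin Hx.
  apply: (CC0 (K := K)) => // r; apply: Hout.
  by move: HD; rewrite leqn0 => /eqP/cards0_eq ->; rewrite in_set0.
case: (set_0Vmem D) => [ED|[r0 Hr0]].
  by apply: (CC0 (K := K)) => // r; apply: Hout; rewrite ED in_set0.
have [t0 [Ez0 Ht0]] := Hin r0 Hr0.
have [deg Hdeg] := choiceL ehom.
have Hhom : forall r, exists g, Lg g (z r).
  move=> r; case: (boolP (r \in D)) => Hr.
    by have [t [-> _]] := Hin r Hr; apply: hom_br.
  by have [t [-> _]] := Hout r Hr; apply: ehom.
have [h Hh] := choiceL (fun q : 'I_n.-1 => Hhom (lift r0 q)).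
have Ez : z = ins r0 (br (fun m => e (t0 m))) (fun q => z (lift r0 q)).
  apply: functional_extensionality => m.
  by case: (unliftP r0 m) => [q ->|->]; rewrite ?ins_lift ?ins_at.
rewrite Ez (@gLt r0 (fun m => deg (t0 m)) h (fun m => e (t0 m)) (fun q => z (lift r0 q))
  (fun r => Hdeg (t0 r)) Hh).
apply: big1 => i _; apply: big1 => j _; apply: big1 => s1 _; apply: big1 => s2 _.
have Hinner : br (ins j (e (t0 (s1 i))) (fun q => z (lift r0 (s2 q)))) = 0.
  apply: (IH _ (fun m => K (srcf r0 j s2 m)) (srcf r0 j s2 @^-1: (D :\ r0))).
  - rewrite card_preimset; last exact: srcf_inj.
    by move: HD; rewrite (cardsD1 r0 D) Hr0 add1n ltnS.
  - move=> m; rewrite inE => Hm.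
    case: (unliftP j m) => [q Em|Em]; subst m.
      rewrite ins_lift srcf_lift; apply: Hout.
      by move: Hm; rewrite srcf_lift in_setD1 eq_sym neq_lift.
    by rewrite ins_at srcf_j; exists (t0 (s1 i)); split.
  - move=> m; rewrite inE in_setD1 => /andP [Hne HmD].
    case: (unliftP j m) => [q Em|Em]; subst m.
      by rewrite ins_lift srcf_lift; rewrite srcf_lift in HmD; apply: Hin.
    by rewrite srcf_j eqxx in Hne.
  - have [g Hg1 Hg2] := injF_bij (@srcf_inj r0 j s2).
    case: Hx => a [b Hab]; exists (g a), (g b).
    by rewrite !Hg2.
rewrite [X in br X](_ : _ = upd (fun m => e (t0 (s1 m))) i 0) ?br_upd0 ?scaler0 //.
by apply: functional_extensionality => m; rewrite /upd; case: eqP => // _.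
Qed.


Hypothesis Vdec : forall x, exists v w, V v /\ W w /\ x = v + w.
Hypothesis Htight : tight br V e.
Hypothesis Hcl : centerless br.

Definition TermC (k : I) (x : L) : Prop :=
  (exists t, x = e t /\ conn k t) \/
  (exists t : 'I_n -> I, x = br (fun m => e (t m)) /\ forall m, conn k (t m)).

Lemma CCT (z : 'I_n -> L) (K : 'I_n -> I) :
  (forall r, TermC (K r) (z r)) -> (exists a b, ~ conn (K a) (K b)) -> br z = 0.
Proof.
move=> HT Hx.
pose D := [set r | pb (~ exists t, z r = e t /\ conn (K r) t)].
apply: (@CC #|D| z K D) => // r; rewrite inE.
  by move=> Hr; apply: NNPP => H; move: Hr; rewrite pbT.
move=> Hr; case: (HT r) => // Hb; exfalso; move: Hr.
by rewrite pbF // => H; apply: H.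
Qed.

Definition Gen (x : L) : Prop := exists k, TermC k x.

Lemma expand p v : (forall x, span_of Gen x) ->
  (forall z, z p = v -> (forall r, r != p -> Gen (z r)) -> br z = 0) ->
  forall z, z p = v -> br z = 0.
Proof.
move=> Hall Hbase.
pose S k := forall z, z p = v ->
  (forall r : 'I_n, r != p -> (k <= r)%N -> Gen (z r)) -> br z = 0.
have S0 : S 0%N by move=> z Hp H; apply: Hbase => // r Hr; exact: H.
have Sk : forall k, S k -> S k.+1.
  move=> k IHk z Hp H; case: (ltnP k n) => Hk.
    pose rk := Ordinal Hk; case: (eqVneq rk p) => Erk.
      apply: IHk => // r Hr Hkr; apply: H => //.
      rewrite ltn_neqAle Hkr andbT; apply/eqP => Ek; move: Hr; rewrite -Erk.
      have Er : r = rk by apply: val_inj; rewrite /= Ek.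
      by rewrite Er eqxx.
    rewrite -(upd_id z rk); apply: (lin1 (P := Gen)); last exact: Hall.
    move=> u Gu; apply: IHk.
      by rewrite /upd eq_sym (negbTE Erk).
    move=> r Hr Hkr; rewrite /upd; case: eqP => [_|Hne] //.
    apply: H => //; rewrite ltn_neqAle Hkr andbT; apply/eqP => Ek; apply: Hne.
    by apply: val_inj; rewrite /= -Ek.
  apply: IHk => // r Hr Hkr; exfalso; have := ltn_ord r.
  by rewrite ltnNge (leq_trans Hk Hkr).
have Sall : forall k, S k by elim=> [|k IHk]; [exact: S0 | exact: Sk].
move=> z Hp; apply: (Sall n) => // r Hr Hnr; exfalso.
by rewrite leqNgt ltn_ord in Hnr.
Qed.

Lemma tcons_map {A B : Type} (f : A -> B) (a : A) (g : 'I_n.-1 -> A) m :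
  tcons (m := n) (f a) (fun q => f (g q)) m = f (tcons (m := n) a g m).
Proof. by case: (unliftP ord0 m) => [q ->|->]; rewrite ?tconsS ?tcons0. Qed.

Lemma tight_mu i1 (rest : 'I_n.-1 -> I) :
  (forall y, mu br V e (Some i1, false) (fun q => Some (rest q), false) y <-> y = None) ->
  (forall m, conn i1 (tcons (m := n) i1 rest m)) /\
  V (br (tcons (m := n) (e i1) (fun q => e (rest q)))).
Proof.
move=> Hmu.
have Ebr : br (tcons (m := n) (e i1) (fun q => e (rest q))) =
           br (fun m => e (tcons (m := n) i1 rest m)).
  by congr br; apply: functional_extensionality => m; rewrite tcons_map.
have Hext : forall s y, a_map br V e s (fun m => Some (tcons (m := n) i1 rest m)) y <->
    a_map br V e s (tcons (m := n) (Some i1) (fun q => Some (rest q))) y.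
  move=> s y; split; apply: a_map_ext => m; by rewrite tcons_map.
split.
  have [s Ha] : exists s, a_map br V e s (tcons (m := n) (Some i1) (fun q => Some (rest q))) None.
    by apply/Hmu.
  move/Hext: Ha => Ha m.
  case: (unliftP ord0 m) => [q ->|->]; last exact: conn_refl.
  have := KeyV Ha (a := lift ord0 q) (b := ord0); rewrite eq_sym neq_lift => /(_ isT) H.
  exact: R1_conn H.
rewrite Ebr; case: (Cond1 (fun m => tcons (m := n) i1 rest m)) => [[j Hj]|] //.
case: (classic (br (fun m => e (tcons (m := n) i1 rest m)) = 0)) => [->|Hnz].
  by case: Vsub.
have Ha := a_map_basis (line_subspace (e j)) Hj Hnz.
have : Some j = None by apply/Hmu; exists 1%g; apply/Hext.
by [].
Qed.

Lemma all_span x : span_of Gen x.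
Proof.
have [v [w [Hv [Hw ->]]]] := Vdec x; apply: spanD.
  case: Htight => [H0|HV]; first by rewrite (H0 v Hv); apply: span0.
  move/HV: Hv; apply: span_mono => y [i1 [rest [Hmu ->]]].
  have [Hc _] := tight_mu Hmu.
  exists i1; right; exists (tcons (m := n) i1 rest); split => //.
  by congr br; apply: functional_extensionality => m; rewrite tcons_map.
move/Wspan: Hw; apply: span_mono => y [i ->]; exists i; left; exists i; split => //.
exact: conn_refl.
Qed.

Definition brC (C : I -> Prop) : L -> Prop :=
  fun z => exists t : 'I_n -> I, (forall r, C (t r)) /\ z = br (fun m => e (t m)).

Lemma termC_K (C : I -> Prop) k p z (t : 'I_n -> I) K0 :
  C = cls br V e k -> (forall r, C (t r)) ->
  (forall r, r != p -> TermC (K0 r) (z r)) ->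
  forall m, TermC ((fun m => if m == p then k else K0 m) m)
    (upd z p (br (fun m => e (t m))) m).
Proof.
move=> Ek Ht HK0 m; rewrite /upd; case: eqP => [_|Hm].
  right; exists t; split => // m'; by move: (Ht m'); rewrite Ek.
by apply: HK0; apply/eqP.
Qed.

Lemma central (s : seq (I -> Prop)) (vf : (I -> Prop) -> L) :
  List.NoDup s ->
  (forall C, List.In C s -> (exists k, C = cls br V e k) /\ span_of (brC C) (vf C)) ->
  \sum_(C <- s) vf C = 0 ->
  forall C, List.In C s -> forall p z, z p = vf C -> br z = 0.
Proof.
move=> ND Hs Hsum C HC p; apply: expand; first exact: all_span.
move=> z Hp Hr.
have [[k Ek] HspC] := Hs C HC.
have [K0 HK0] : exists K0 : 'I_n -> I, forall r, r != p -> TermC (K0 r) (z r).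
  apply: (choiceL (R := fun r k0 => r != p -> TermC k0 (z r))) => r.
  case: (eqVneq r p) => [_|Hrp]; first by exists k.
  by have [k0 Hk0] := Hr r Hrp; exists k0.
case: (classic (exists r, r != p /\ ~ conn k (K0 r))) => [[r [Hrp Hnc]]|Hall].
  rewrite -(upd_id z p) Hp; apply: (lin1 _ HspC) => u [t [Ht ->]].
  apply: (CCT (K := fun m => if m == p then k else K0 m)).
    exact: (termC_K Ek Ht HK0).
  by exists p, r; rewrite eqxx (negbTE Hrp).
have Hall' : forall r, r != p -> conn k (K0 r).
  by move=> r Hrp; apply: NNPP => Hn; apply: Hall; exists r.
rewrite (big_split_at vf ND HC) in Hsum.
have EvC : vf C = - \sum_(t <- s) (if pb (t = C) then 0 else vf t).
  by apply/eqP; rewrite -addr_eq0 Hsum.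
rewrite -(upd_id z p) Hp EvC br_updN br_upd_sum big_In0 ?oppr0 // => C' HC'.
case: (classic (C' = C)) => [->|HneC]; first by rewrite pbT // br_upd0.
rewrite pbF //.
have [[k' Ek'] HspC'] := Hs C' HC'.
apply: (lin1 _ HspC') => u [t [Ht ->]].
apply: (CCT (K := fun m => if m == p then k' else K0 m)).
  exact: (termC_K Ek' Ht HK0).
exists p, (lift p ord0); rewrite eqxx eq_sym (negbTE (neq_lift _ _)) => Hc.
apply: HneC; rewrite Ek Ek'; apply: cls_eq.
apply: conn_trans Hc (conn_sym _); apply: Hall'; by rewrite eq_sym neq_lift.
Qed.


Lemma sum_of_add {T : Type} (P : T -> Prop) (A : T -> L -> Prop) x C y :
  (forall t, P t -> subspace (A t)) -> sum_of P A x -> P C -> A C y -> sum_of P A (x + y).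
Proof.
move=> HS [s [f [ND [Hf ->]]]] PC ACy.
case: (classic (List.In C s)) => HCs.
  exists s, (fun t => if pb (t = C) then f t + y else f t); split => //; split.
    move=> t Ht; have [Pt Aft] := Hf t Ht; split => //.
    case: (classic (t = C)) => [Et|Ne]; last by rewrite pbF.
    rewrite pbT //; subst t; exact: subspaceD (HS C PC) Aft ACy.
  rewrite (big_split_at f ND HCs) [RHS](big_split_at _ ND HCs) pbT //.
  have -> : \sum_(t <- s) (if pb (t = C) then 0 else
                (if pb (t = C) then f t + y else f t)) =
            \sum_(t <- s) (if pb (t = C) then 0 else f t).
    by apply: eq_bigr => t _; case: pb.
  by rewrite addrAC.
exists (C :: s), (fun t => if pb (t = C) then y else f t); split.
  by constructor.
split.
  move=> t [<-|Ht]; first by rewrite pbT.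
  rewrite pbF; first exact: Hf.
  by move=> Et; apply: HCs; rewrite -Et.
rewrite big_cons pbT // addrC; congr (_ + _); apply: big_In_eq => t Ht.
by rewrite pbF // => Et; apply: HCs; rewrite -Et.
Qed.

Lemma sum_of_span {T : Type} (P : T -> Prop) (A : T -> L -> Prop) (Q : L -> Prop) :
  (forall t, P t -> subspace (A t)) -> (forall y, Q y -> exists C, P C /\ A C y) ->
  forall x, span_of Q x -> sum_of P A x.
Proof.
move=> HS HQ; apply: span_ind.
  exists [::], (fun _ => 0); split; first by constructor.
  by split => //; rewrite big_nil.
move=> a u v Qu Hv; have [C [PC ACu]] := HQ u Qu.
rewrite addrC; apply: (sum_of_add HS Hv PC).
exact: subspaceZ (HS C PC) ACu.
Qed.

Lemma J_sub C : subspace (J_cls br V e C).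
Proof.
split.
  exists 0, 0; split; first by split; [case: Vsub|apply: span0].
  by split; [apply: span0|rewrite addr0].
move=> a x y [v1 [w1 [[Hv1 Hs1] [Hw1 ->]]]] [v2 [w2 [[Hv2 Hs2] [Hw2 ->]]]].
exists (a *: v1 + v2), (a *: w1 + w2); split.
  by split; [case: Vsub => _; apply|apply: spanDZ].
by split; [apply: spanDZ|rewrite scalerDr addrACA].
Qed.

Lemma span_NF (P : I -> Prop) x : span_of (fun z => exists j, P j /\ z = e j) x ->
  exists (l : seq I) (c : I -> F), List.NoDup l /\ (forall j, List.In j l -> P j) /\
    x = \sum_(j <- l) c j *: e j.
Proof.
move: x; apply: (span_ind (Q := fun x => exists (l : seq I) (c : I -> F),
  List.NoDup l /\ (forall j, List.In j l -> P j) /\ x = \sum_(j <- l) c j *: e j)).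
  by exists [::], (fun _ => 0); split; [constructor|split => //; rewrite big_nil].
move=> a u v [j [Pj ->]] [l [c [ND [Hl ->]]]].
case: (classic (List.In j l)) => Hj.
  exists l, (fun i => if pb (i = j) then c i + a else c i); split => //; split => //.
  rewrite (big_split_at (fun i => c i *: e i) ND Hj).
  rewrite (big_split_at (fun i => (if pb (i = j) then c i + a else c i) *: e i) ND Hj).
  rewrite pbT //.
  have -> : \sum_(t <- l) (if pb (t = j) then 0 else
                (if pb (t = j) then c t + a else c t) *: e t) =
            \sum_(t <- l) (if pb (t = j) then 0 else c t *: e t).
    by apply: eq_bigr => t _; case: pb.
  by rewrite scalerDl addrA [c j *: _ + _]addrC.
exists (j :: l), (fun i => if pb (i = j) then a else c i); split; first by constructor.
split; first by move=> i [<-|Hi] //; apply: Hl.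
rewrite big_cons pbT //; congr (_ + _); apply: big_In_eq => t Ht.
by rewrite pbF // => Et; apply: Hj; rewrite -Et.
Qed.

Lemma span_disj (P : I -> Prop) x :
  span_of (fun z => exists j, P j /\ z = e j) x ->
  span_of (fun z => exists j, ~ P j /\ z = e j) x -> x = 0.
Proof.
move=> /span_NF [l1 [c1 [ND1 [H1 E1]]]] /span_NF [l2 [c2 [ND2 [H2 E2]]]].
pose c i := if pb (P i) then c1 i else - c2 i.
have ND : List.NoDup (l1 ++ l2).
  apply: List.NoDup_app => // a Ha Hb.
  by apply: (H2 a Hb); apply: H1.
have Hs : \sum_(i <- l1 ++ l2) c i *: e i = 0.
  rewrite big_cat.
  rewrite (big_In_eq (g := fun i => c1 i *: e i)); last first.
    by move=> t Ht; rewrite /c pbT //; apply: H1.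
  rewrite (big_In_eq (s := l2) (g := fun i => - (c2 i *: e i))); last first.
    by move=> t Ht; rewrite /c pbF ?scaleNr //; apply: H2.
  by rewrite sumrN -E1 -E2; apply: subrr.
rewrite E1; apply: big_In0 => t Ht.
have := Eind ND Hs (i := t); rewrite /c pbT; last exact: H1.
by move=> ->; [rewrite scale0r | apply: List.in_or_app; left].
Qed.

Theorem main_sec : is_direct_sum (fun _ : L => True)
  (fun C : I -> Prop => exists i, C = cls br V e i) (J_cls br V e).
Proof.
split; first by move=> C _; apply: J_sub.
split.
  move=> x; split => // _.
  pose Q y := (exists i, y = e i) \/ (exists i1 (rest : 'I_n.-1 -> I),
     (forall y, mu br V e (Some i1, false) (fun q => Some (rest q), false) y <-> y = None) /\
     y = br (tcons (m := n) (e i1) (fun q => e (rest q)))).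
  apply: (sum_of_span (Q := Q)).
  - by move=> C _; apply: J_sub.
  - move=> y [[i ->]|[i1 [rest [Hmu ->]]]].
      exists (cls br V e i); split; first by exists i.
      exists 0, (e i); split; first by split; [case: Vsub|apply: span0].
      by split; [apply: span_in; exists i; split => //; apply: conn_refl|rewrite add0r].
    have [Hc HV] := tight_mu Hmu.
    exists (cls br V e i1); split; first by exists i1.
    exists (br (tcons (m := n) (e i1) (fun q => e (rest q)))), 0; split.
      split => //; apply: span_in; exists (tcons (m := n) i1 rest); split => //.
      by congr br; apply: functional_extensionality => m; rewrite tcons_map.
    by split; [apply: span0|rewrite addr0].
  - have [v [w [Hv [Hw ->]]]] := Vdec x; apply: spanD.
      case: Htight => [H0|HV]; first by rewrite (H0 v Hv); apply: span0.
      move/HV: Hv; apply: span_mono => y [i1 [rest [Hmu ->]]].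
      by right; exists i1, rest.
    by move/Wspan: Hw; apply: span_mono => y Hy; left.
move=> s f ND Hf Hsum C HC.
have [vw Hvw] : exists vw : (I -> Prop) -> L * L, forall C, List.In C s ->
    V_cls br V e C (vw C).1 /\ W_cls e C (vw C).2 /\ f C = (vw C).1 + (vw C).2.
  apply: (choiceL (R := fun C p => List.In C s ->
      V_cls br V e C p.1 /\ W_cls e C p.2 /\ f C = p.1 + p.2)) => C'.
  case: (classic (List.In C' s)) => HC'; last by exists (0, 0).
  have [_ [v [w [Hv [Hw Ef]]]]] := Hf C' HC'; by exists (v, w).
pose vf C := (vw C).1; pose wf C := (vw C).2.
have Esum : \sum_(t <- s) f t = \sum_(t <- s) vf t + \sum_(t <- s) wf t.
  rewrite -big_split; apply: big_In_eq => t Ht.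
  by have [_ [_ ->]] := Hvw t Ht.
have HVs : V (\sum_(t <- s) vf t).
  by apply: subspace_sum => // t Ht; have [[]] := Hvw t Ht.
have HWs : W (- \sum_(t <- s) wf t).
  apply/Wspan; apply: spanN; apply: subspace_sum; first exact: span_subspace.
  move=> t Ht; have [_ [Hw _]] := Hvw t Ht; move: Hw; apply: span_mono.
  by move=> y [j [_ ->]]; exists j.
have Hv0 : \sum_(t <- s) vf t = 0.
  apply: VW0 => //; suff -> : \sum_(t <- s) vf t = - \sum_(t <- s) wf t by [].
  by apply/eqP; rewrite -addr_eq0 -Esum Hsum.
have Hw0 : \sum_(t <- s) wf t = 0.
  by move: Hsum; rewrite Esum Hv0 add0r.
have [_ [_ Ef]] := Hvw C HC; rewrite Ef -/(vf C) -/(wf C).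
have -> : vf C = 0.
  apply: Hcl => sg; apply: span_sub.
    by split => // a x y -> ->; rewrite scaler0 addr0.
  move=> y [x' [Hx' ->]].
  apply: (central (vf := vf) ND _ Hv0 HC (p := (sg^-1)%g ord0)).
    move=> C' HC'; split; first by have [] := Hf C' HC'.
    by have [[_ Hsp] _] := Hvw C' HC'.
  by rewrite permKV; apply: (Hx' ord0).
rewrite add0r; apply: (span_disj (P := C)).
  by have [_ [Hw _]] := Hvw C HC.
rewrite (big_split_at wf ND HC) in Hw0.
have -> : wf C = - \sum_(t <- s) (if pb (t = C) then 0 else wf t).
  by apply/eqP; rewrite -addr_eq0 Hw0.
apply: spanN; apply: subspace_sum; first exact: span_subspace.
move=> t Ht; case: (classic (t = C)) => [Et|Ne]; first by rewrite pbT //; apply: span0.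
rewrite pbF //; have [_ [Hw _]] := Hvw t Ht; move: Hw; apply: span_mono.
move=> y [j [Htj ->]]; exists j; split => // HCj; apply: Ne.
have [[k Ek] _] := Hf C HC; have [[k' Ek'] _] := Hf t Ht.
rewrite Ek Ek'; apply: cls_eq; rewrite Ek in HCj; rewrite Ek' in Htj.
exact: conn_trans Htj (conn_sym HCj).
Qed.

End Main.

Theorem corollary3p15 (F : fieldType) (G : zmodType) (L : lmodType F) (n : nat)
    (I : Type) (eps : G -> G -> F) (Lg : G -> L -> Prop) (br : ('I_n -> L) -> L)
    (alpha : {perm 'I_n} -> {perm 'I_n.-1} -> 'I_n -> 'I_n -> 'I_n -> F)
    (V W : L -> Prop) (e : I -> L) :
  (2 <= n)%N ->
  bicharacter eps ->
  graded_nary_algebra Lg br ->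
  color_gLt eps Lg br alpha ->
  quasi_multiplicative_basis Lg br V W e ->
  centerless br ->
  tight br V e ->
  is_direct_sum (fun _ : L => True) (fun C : I -> Prop => exists i, C = cls br V e i)
    (J_cls br V e).
Proof.
case: n br alpha => [|[|n']] br alpha // _ _ [_ [ML Hgr]] HgLt HQ Hcl Ht.
move: HQ => [[Vsub _] [_ [VW0 [Vdec [_ [Wspan [Eind [ehom [Cond1 _]]]]]]]]].
exact: (@main_sec F G L n' I br V W e ML Vsub Wspan Eind VW0 Cond1 eps Lg alpha HgLt Hgr ehom Vdec Ht Hcl).
Qed.
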